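(* For every integer $p>1$ and every $N\in\mathbb N$, the group $\mathrm{GL}_{p-rec}(\mathbb C)$ contains an element $G$ of complexity $2$ whose inverse $G^{-1}$ has complexity $\ge N$.
   Context: $\mathcal M_{p\times p}$ is the monoid of pairs $(U,W)$ of words of common length over $\{0,\dots,p-1\}$ (concatenation). For $A:\mathcal M_{p\times p}\to\mathbb C$ (values $A[U,W]$), shift maps act by $(\rho(S,T)A)[U,W]=A[US,WT]$; the complexity of $A$ is the dimension of the linear span of $\{\rho(S,T)A\}$, and $\mathrm{Rec}_{p\times p}(\mathbb C)$ is the set of $A$ of finite complexity. It is an algebra for the product $(AB)[U,W]=\sum_{V\in\{0,\dots,p-1\}^l}A[U,V]B[V,W]$ ($(U,W)$ of length $l$), with identity $\mathrm{Id}[U,W]=1$ if $U=W$ and $0$ otherwise. $\mathrm{GL}_{p-rec}(\mathbb C)$ is the group of elements of $\mathrm{Rec}_{p\times p}(\mathbb C)$ invertible in $\mathrm{Rec}_{p\times p}(\mathbb C)$. *)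

(* Defs.v *)
From HB Require Import structures.
From mathcomp Require Import all_boot all_order all_algebra.
From mathcomp Require Import reals.
From mathcomp Require Import complex.
Set Implicit Arguments. Unset Strict Implicit. Unset Printing Implicit Defensive.
Import Order.TTheory GRing.Theory Num.Theory.
Local Open Scope ring_scope.

Definition Cplx (R : realType) : Type := (R[i])%C.

Definition word (p : nat) := seq 'I_p.

(* Functions on M_{pxp}: only values on pairs (U,W) with size U = size W matter. *)
Definition mfun (R : realType) (p : nat) := word p -> word p -> Cplx R.

Section Defs.
Variables (R : realType) (p : nat).
Local Notation mf := (mfun R p).

Definition eqM (A B : mf) : Prop :=
  forall U W : word p, size U = size W -> A U W = B U W.

Definition shift (S T : word p) (A : mf) : mf := fun U W => A (U ++ S) (W ++ T).

Definition lincomb (n : nat) (c : 'I_n -> Cplx R) (F : 'I_n -> mf) : mf :=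
  fun U W => \sum_(i < n) c i * F i U W.

Definition zero_mf : mf := fun _ _ => 0.

Definition lin_indep (n : nat) (F : 'I_n -> mf) : Prop :=
  forall c : 'I_n -> Cplx R, eqM (lincomb c F) zero_mf -> forall i, c i = 0.

Definition in_span (n : nat) (A : mf) (F : 'I_n -> mf) : Prop :=
  exists c : 'I_n -> Cplx R, eqM A (lincomb c F).

(* A has complexity n: the span of {rho(S,T) A} has dimension n, i.e. it has a
   basis of n shifts of A (a spanning family of vectors contains a basis). *)
Definition has_complexity (A : mf) (n : nat) : Prop :=
  exists ST : 'I_n -> word p * word p,
    (forall i, size (ST i).1 = size (ST i).2) /\
    lin_indep (fun i => shift (ST i).1 (ST i).2 A) /\
    (forall S T : word p, size S = size T ->
       in_span (shift S T A) (fun i => shift (ST i).1 (ST i).2 A)).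

Definition is_rec (A : mf) : Prop := exists n, has_complexity A n.

Definition mulM (A B : mf) : mf :=
  fun U W => \sum_(V : (size U).-tuple 'I_p) A U (tval V) * B (tval V) W.

Definition idM : mf := fun U W => if U == W then 1 else 0.

Definition is_rec_inverse (G H : mf) : Prop :=
  is_rec G /\ is_rec H /\ eqM (mulM G H) idM /\ eqM (mulM H G) idM.

End Defs.

(* Main.v *)
Require Import Defs.
From mathcomp Require Import all_boot all_algebra reals complex.
From mathcomp Require Import zify ring.
From Stdlib Require Import Lia.
Set Implicit Arguments. Unset Strict Implicit. Unset Printing Implicit Defensive.
Import GRing.Theory Num.Theory.
Local Open Scope ring_scope.

Section Roots.
Variable R : realType.

Fixpoint rootw (k : nat) : R[i] :=
  match k with 0 => -1 | k.+1 => sqrtc (rootw k) end.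

Lemma rootw_half k : rootw k ^+ (2 ^ k) = -1.
Proof.
elim: k => [|k IH] /=; first by rewrite expr1.
by rewrite expnS exprM sqr_sqrtc.
Qed.

Lemma m1_neq1 : (-1 : R[i]) != 1.
Proof.
apply/negP => /eqP H.
have : (2%:R : R[i]) == 0 by rewrite mulr2n -{1}H addNr.
by rewrite pnatr_eq0.
Qed.

Lemma sign_eq1 t : (-1 : R[i]) ^+ t = 1 -> ~~ odd t.
Proof.
rewrite -signr_odd; case: (odd t) => //= H.
by move: m1_neq1; rewrite expr1 in H; rewrite H eqxx.
Qed.

Lemma rootw_ord k r : rootw k ^+ r = 1 -> (2 ^ k.+1 %| r)%N.
Proof.
elim: k r => [|k IH] r.
  by move=> /sign_eq1; rewrite expn1 dvdn2.
move=> H.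
have H2 : rootw k ^+ r = 1.
  by rewrite -(sqr_sqrtc (rootw k)) -exprM mulnC exprM [sqrtc _ ^+ r]H expr1n.
have := IH _ H2; case/dvdnP => t Ht.
move: H; rewrite Ht mulnC exprM rootw_half => /sign_eq1.
rewrite -dvdn2 => /dvdnP [u ->].
by rewrite mulnCA -expnSr dvdn_mull.
Qed.

End Roots.
Section Fourier.
Variables (R : realType) (N : nat).
Definition M := (2 ^ N.+1)%N.
Definition om : R[i] := rootw R N.

Lemma M_gt1 : (1 < M)%N.
Proof. by rewrite /M -{1}(expn0 2) ltn_exp2l. Qed.

Lemma om_eq1 r : (om ^+ r == 1) = (M %| r)%N.
Proof.
apply/eqP/idP; first exact: rootw_ord.
case/dvdnP => t ->; rewrite /om /M expnSr mulnC -mulnA exprM rootw_half.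
by rewrite -signr_odd mul2n odd_double expr0.
Qed.

Lemma omM : om ^+ M = 1.
Proof. by apply/eqP; rewrite om_eq1. Qed.

Lemma two_neq0 : (2 : R[i]) != 0.
Proof. by rewrite pnatr_eq0. Qed.

Lemma Mnat_neq0 : (M%:R : R[i]) != 0.
Proof. by rewrite pnatr_eq0 /M expn_eq0. Qed.

Lemma twoM_neq1 : (2 : R[i]) ^+ M != 1.
Proof.
rewrite -natrX (_ : 1 = 1%:R) // eqr_nat.
have b := ltn_expl M (isT : (1 < 2)%N); have a := M_gt1.
apply/eqP => e; rewrite e in b; lia.
Qed.

Lemma gnz m : 2 - om ^+ m != 0.
Proof.
rewrite subr_eq0; apply/negP => /eqP H.
move: twoM_neq1; rewrite H -exprM mulnC exprM omM expr1n eqxx.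
done.
Qed.

Lemma geom (x : R[i]) : x ^+ M = 1 ->
  \sum_(i < M) x ^+ i = if x == 1 then M%:R else 0.
Proof.
move=> HM; case: eqP => [->|/eqP Hx].
  by under eq_bigr do rewrite expr1n; rewrite sumr_const card_ord.
have := subrX1 x M; rewrite HM subrr => /esym/eqP.
by rewrite mulf_eq0 subr_eq0 (negbTE Hx) => /eqP.
Qed.

Lemma idx_eq (k j : nat) : (k < M)%N -> (j < M)%N ->
  (M %| k + (M - 1) * j)%N = (k == j).
Proof.
move=> Hk Hj; apply/idP/eqP => [/dvdnP [t Ht]|->].
  have [Hl|[Hl|Hl]] : (t <= j.-1 \/ t = j \/ j.+1 <= t)%N by lia.
  - nia. - subst. nia. - nia.
apply/dvdnP; exists j; have := M_gt1; nia.
Qed.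

Lemma DFT_inj (d : 'I_M -> R[i]) :
  (forall m : 'I_M, \sum_(k < M) d k * om ^+ (m * k) = 0) -> forall j, d j = 0.
Proof.
move=> H j.
have E : \sum_(m < M) om ^+ (m * ((M - 1) * j)) * (\sum_(k < M) d k * om ^+ (m * k)) = 0.
  by apply: big1 => m _; rewrite H mulr0.
have E2 : \sum_(m < M) om ^+ (m * ((M - 1) * j)) * (\sum_(k < M) d k * om ^+ (m * k))
   = \sum_(k < M) d k * \sum_(m < M) (om ^+ (k + (M - 1) * j)) ^+ m.
  under eq_bigr => m _ do rewrite mulr_sumr.
  rewrite exchange_big /=; apply: eq_bigr => k _; rewrite mulr_sumr.
  apply: eq_bigr => m _; rewrite -!exprM mulrCA -exprD.
  by rewrite mulnC mulnDl addnC [(k * m)%N]mulnC.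
move: E; rewrite E2.
have E3 : forall k : 'I_M, \sum_(m < M) (om ^+ (k + (M - 1) * j)) ^+ m
    = if k == j then M%:R else 0.
  move=> k; rewrite geom; last by rewrite -exprM mulnC exprM omM expr1n.
  by rewrite om_eq1 idx_eq.
under eq_bigr => k _ do rewrite E3.
rewrite (bigD1 j) //= eqxx big1 => [|k /negbTE -> ]; last by rewrite mulr0.
rewrite addr0 => /eqP; rewrite mulf_eq0 (negbTE Mnat_neq0) orbF.
by move/eqP.
Qed.
End Fourier.
Section Inv.
Variables (R : realType) (N : nat).
Local Notation M := (M N).
Local Notation om := (om R N).

Definition acoef (k : nat) : R[i] := 2 ^+ (M.-1 - k) / (2 ^+ M - 1).

Lemma twoM1_neq0 : (2 : R[i]) ^+ M - 1 != 0.
Proof. by rewrite subr_eq0 twoM_neq1. Qed.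

Lemma acoef_neq0 k : acoef k != 0.
Proof.
by rewrite /acoef mulf_neq0 ?expf_neq0 ?two_neq0 // invr_neq0 // twoM1_neq0.
Qed.

Lemma hexp m : (2 - om ^+ m)^-1 = \sum_(k < M) acoef k * om ^+ (m * k).
Proof.
have -> : \sum_(k < M) acoef k * om ^+ (m * k)
   = (\sum_(k < M) 2 ^+ (M.-1 - k) * (om ^+ m) ^+ k) / (2 ^+ M - 1).
  rewrite mulr_suml; apply eq_bigr => k _; rewrite /acoef exprM.
  by rewrite mulrAC.
set Sg := \sum_(k < M) _.
have S : 2 ^+ M - 1 = (2 - om ^+ m) * Sg.
  by rewrite -subrXX -exprM mulnC exprM omM expr1n.
have nz := twoM1_neq0; rewrite S mulf_eq0 negb_or in nz.
case/andP: nz => nz1 nz2.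
rewrite S; field.
by rewrite nz1 nz2.
Qed.

Lemma indep_inv (c : 'I_M -> R[i]) :
  (forall m : nat, \sum_(s < M) c s * (2 - om ^+ (m + s))^-1 = 0) ->
  forall s, c s = 0.
Proof.
move=> H.
have E : forall k : 'I_M, acoef k * \sum_(s < M) c s * om ^+ (s * k) = 0.
  apply: (DFT_inj (d := fun k : 'I_M => acoef k * \sum_(s < M) c s * om ^+ (s * k))) => m.
  rewrite -[RHS](H m); under [RHS]eq_bigr => s _ do rewrite hexp mulr_sumr.
  rewrite exchange_big /=; apply eq_bigr => k _.
  rewrite -mulrA mulr_suml mulr_sumr; apply eq_bigr => s _.
  rewrite mulnDl exprD; ring.
apply: DFT_inj => k.
have := E k; move/eqP; rewrite mulf_eq0 (negbTE (acoef_neq0 k)) /= => /eqP E1; rewrite -[RHS]E1.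
by apply eq_bigr => s _; rewrite mulnC.
Qed.
End Inv.
Section Words.
Variables (R : realType) (p : nat) (hp : (1 < p)%N).

Definition one : 'I_p := Ordinal hp.
Definition cnt (U : word p) : nat := count_mem one U.
Definition Dg (D : nat -> R[i]) : mfun R p :=
  fun U W => if U == W then D (cnt U) else 0.

Lemma cnt_nseq j : cnt (nseq j one) = j.
Proof. by elim: j => //= j; rewrite /cnt /= => ->. Qed.

Lemma shift_Dg D (S T U W : word p) : size S = size T -> size U = size W ->
  shift S T (Dg D) U W = if S == T then Dg (fun m => D (m + cnt S)%N) U W else 0.
Proof.
move=> HST HUW; rewrite /shift /Dg eqseq_cat //.
case: (eqVneq U W) => [->|_] /=; last by case: (S == T).
by case: (S == T) => //; rewrite /cnt count_cat.
Qed.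

Lemma Dg_complexity n (D : nat -> R[i]) :
  (forall c : 'I_n -> R[i], (forall m : nat, \sum_(i < n) c i * D (m + i)%N = 0) ->
     forall i, c i = 0) ->
  (forall j, exists c : 'I_n -> R[i],
     forall m : nat, D (m + j)%N = \sum_(i < n) c i * D (m + i)%N) ->
  has_complexity (Dg D) n.
Proof.
move=> Hind Hspan.
exists (fun i => (nseq i one, nseq i one)); split; first by [].
split.
  move=> c Hc; apply: (Hind c) => m.
  have := Hc (nseq m one) (nseq m one) erefl; rewrite /lincomb /zero_mf => E; rewrite -[RHS]E.
  apply eq_bigr => i _.
  by rewrite shift_Dg ?size_nseq // eqxx /Dg eqxx !cnt_nseq.
move=> S T HST; case: (eqVneq S T) => [<-|neq].
  have [c Hc] := Hspan (cnt S); exists c => U W HUW.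
  rewrite /lincomb shift_Dg // eqxx /Dg; case: (eqVneq U W) => [<-|nUW].
    rewrite Hc; apply eq_bigr => i _.
    by rewrite shift_Dg ?size_nseq // eqxx /Dg eqxx cnt_nseq.
  rewrite big1 // => i _.
  by rewrite shift_Dg ?size_nseq // eqxx /Dg (negbTE nUW) mulr0.
exists (fun _ => 0) => U W HUW.
by rewrite /lincomb shift_Dg // (negbTE neq) big1 // => i _; rewrite mul0r.
Qed.

Lemma mulM_Dg D E (U W : word p) :
  mulM (Dg D) (Dg E) U W = Dg (fun m => D m * E m) U W.
Proof.
rewrite /mulM (bigD1 (in_tuple U)) //= big1 => [|V HV].
  rewrite /Dg eqxx addr0; case: (U == W); first by [].
  by rewrite mulr0.
rewrite /Dg; case: eqP => [E1|_]; last by rewrite mul0r.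
exfalso; move/negP: HV; apply; apply/eqP/val_inj => /=.
exact (esym E1).
Qed.

End Words.

Unset Implicit Arguments.
Theorem mainTheorem12 (R : realType) (p : nat) (hp : (1 < p)%N) (N : nat) :
  exists G Ginv : mfun R p,
    is_rec_inverse G Ginv /\
    has_complexity G 2 /\
    exists n : nat, has_complexity Ginv n /\ (N <= n)%N.
Proof.
set om := om R N.
have omn1 : om - 1 != 0.
  rewrite subr_eq0 -[om]expr1 om_eq1 dvdn1; have := M_gt1 N; lia.
have Hper : forall j, om ^+ j = om ^+ (j %% M N).
  by move=> j; rewrite {1}(divn_eq j (M N)) exprD mulnC exprM omM expr1n mul1r.
have HG : has_complexity (Dg hp (fun m => 2 - om ^+ m)) 2.
  apply: Dg_complexity.
    move=> c Hc.
    have h0 := Hc 0%N; have h1 := Hc 1%N.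
    rewrite !big_ord_recl !big_ord0 /= in h0 h1.
    rewrite (_ : (1 + bump 0 0)%N = 2%N) // in h1.
    set c0 := c ord0 in h0 h1; set c1 := c (lift ord0 ord0) in h0 h1.
    rewrite !addr0 !add0n !addn0 expr0 expr1 in h0 h1.
    have key : c1 * (2 * (om - 1) ^+ 2) = 0.
      rewrite -[RHS](_ : (2 - om) * 0 - 0 = 0); last by rewrite mulr0 subr0.
      rewrite -{1}h0 -h1; ring.
    have e1 : c1 = 0.
      apply/eqP; move/eqP: key; rewrite mulf_eq0 => /orP [//|].
      by rewrite mulf_eq0 (negbTE (two_neq0 R)) /= expf_eq0 (negbTE omn1) andbF.
    have e0 : c0 = 0.
      have -> : c0 = c0 * (2 - 1) by ring.
      by move: h0; rewrite e1 mul0r addr0.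
    move=> [[|[|i]] Hi].
    - by rewrite -e0 /c0; congr c; apply: val_inj.
    - by rewrite -e1 /c1; congr c; apply: val_inj.
    - by [].
  move=> j; set b := (om ^+ j - 1) / (om - 1).
  exists (fun i : 'I_2 => if i == ord0 then 1 - b else b) => m.
  rewrite !big_ord_recl big_ord0 /= addr0 addn0 !exprD expr1 /b.
  field; exact: omn1.
have HGi : has_complexity (Dg hp (fun m => (2 - om ^+ m)^-1)) (M N).
  apply: Dg_complexity; first exact: indep_inv.
  move=> j; have Mpos : (0 < M N)%N by have := M_gt1 N; lia.
  exists (fun i : 'I_(M N) => if (i == (j %% M N)%N :> nat) then 1 else 0) => m.
  rewrite (bigD1 (Ordinal (ltn_pmod j Mpos))) //= eqxx mul1r big1 => [|i Hi].
    by rewrite addr0 !exprD (Hper j).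
  case: eqP => [Ei|_]; last by rewrite mul0r.
  by exfalso; move/negP: Hi; apply; apply/eqP/val_inj.
exists (Dg hp (fun m => 2 - om ^+ m)), (Dg hp (fun m => (2 - om ^+ m)^-1)).
split; last split.
- split; first by exists 2%N.
  split; first by exists (M N).
  split => U W _; rewrite mulM_Dg /Dg /idM; case: eqP => _ //.
    by rewrite mulfV //; exact: gnz.
  by rewrite mulVf //; exact: gnz.
- exact: HG.
- exists (M N); split; first exact: HGi.
  rewrite /M expnS; have := ltn_expl N (isT : (1 < 2)%N); lia.
Qed.
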